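(* Let $\mathbf{A}\in\mathbb{C}^{M\times N_a}$ and $\mathbf{B}\in\mathbb{C}^{M\times N_b}$ have unit-$\ell_2$-norm columns, let $\mathbf{D}=[\mathbf{A}\ \mathbf{B}]$, with coherence parameters $\mu_a,\mu_b,\mu_m$ and $\mu_d=\max\{\mu_a,\mu_b,\mu_m\}$, and assume $\mu_b\le\mu_a$. Let $\mathbf{z}=\mathbf{D}\mathbf{w}+\mathbf{n}$ with $\mathbf{w}=[\mathbf{x}^T\ \mathbf{e}^T]^T\in\mathbb{C}^{N_a+N_b}$ and $\|\mathbf{n}\|_2\le\varepsilon$. Let $w\ge1$ be an integer and $\mathcal{W}=\mathrm{supp}_w(\mathbf{w})$. If $$w<\max\left\{\frac{2(1+\mu_a)}{\mu_a+2\mu_d+\sqrt{\mu_a^2+\mu_m^2}},\ \frac{1+\mu_d}{2\mu_d}\right\},$$ then for any $\eta\ge\varepsilon$ every solution $\hat{\mathbf{w}}$ of $$\text{minimize }\|\tilde{\mathbf{w}}\|_1\ \text{ subject to }\ \|\mathbf{z}-\mathbf{D}\tilde{\mathbf{w}}\|_2\le\eta$$ satisfies $$\|\mathbf{w}-\hat{\mathbf{w}}\|_2\le C_7(\varepsilon+\eta)+C_8\|\mathbf{w}-\mathbf{w}_{\mathcal{W}}\|_1,$$ where $C_7,C_8\ge0$ depend only on $\mu_a,\mu_b,\mu_m,\mu_d$ and $w$.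
   Context: Coherence parameters: $\mu_a=\max_{k\ne\ell}|\mathbf{a}_k^H\mathbf{a}_\ell|$, $\mu_b=\max_{k\ne\ell}|\mathbf{b}_k^H\mathbf{b}_\ell|$, $\mu_m=\max_{k,\ell}|\mathbf{a}_k^H\mathbf{b}_\ell|$, where $\mathbf{a}_k,\mathbf{b}_\ell$ are the columns of $\mathbf{A},\mathbf{B}$; $\mu_d$ equals the coherence $\max_{i\ne j}|\mathbf{d}_i^H\mathbf{d}_j|$ of $\mathbf{D}$. $\mathbf{w}_{\mathcal{S}}$ is $\mathbf{w}$ with entries outside $\mathcal{S}$ set to zero. $\mathrm{supp}_n(\mathbf{w})$ denotes an index set of size $n$ minimizing $\|\mathbf{w}-\mathbf{w}_{\tilde{\mathcal{W}}}\|_1$ over all index sets $\tilde{\mathcal W}$ of size $n$. *)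

(* Defs.v *)
(* Complex field rendered as an arbitrary numClosedFieldType C
   (e.g. algC; any algebraically closed field with conjugation and norm). *)
From HB Require Import structures.
From mathcomp Require Import all_boot all_order all_algebra.
Set Implicit Arguments. Unset Strict Implicit. Unset Printing Implicit Defensive.
Import Order.TTheory GRing.Theory Num.Theory.
Local Open Scope ring_scope.

Section Defs.
Variable C : numClosedFieldType.

Definition l2norm (n : nat) (v : 'cV[C]_n) : C :=
  sqrtC (\sum_(i < n) `|v i 0| ^+ 2).
Definition l1norm (n : nat) (v : 'cV[C]_n) : C := \sum_(i < n) `|v i 0|.

Definition colinner (M p q : nat) (P : 'M[C]_(M, p)) (Q : 'M[C]_(M, q))
  (k : 'I_p) (l : 'I_q) : C := \sum_(i < M) (P i k)^* * Q i l.

Definition unit_cols (M p : nat) (P : 'M[C]_(M, p)) : Prop :=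
  forall k : 'I_p, \sum_(i < M) `|P i k| ^+ 2 = 1.

(* mu_a = max_{k <> l} |a_k^H a_l|  (0 if there is no such pair) *)
Definition mu_self (M p : nat) (P : 'M[C]_(M, p)) : C :=
  \big[Num.max/0]_(k < p) \big[Num.max/0]_(l < p | l != k) `|colinner P P k l|.

Definition mu_mutual (M p q : nat) (P : 'M[C]_(M, p)) (Q : 'M[C]_(M, q)) : C :=
  \big[Num.max/0]_(k < p) \big[Num.max/0]_(l < q) `|colinner P Q k l|.

Definition restrict (n : nat) (v : 'cV[C]_n) (S : {set 'I_n}) : 'cV[C]_n :=
  \col_i (if i \in S then v i 0 else 0).

Definition is_supp (n : nat) (s : nat) (v : 'cV[C]_n) (S : {set 'I_n}) : Prop :=
  #|S| = s /\
  forall S' : {set 'I_n}, #|S'| = s -> l1norm (v - restrict v S) <= l1norm (v - restrict v S').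

End Defs.

(* Main.v *)
Require Import Defs.
From HB Require Import structures.
From mathcomp Require Import all_boot all_order all_algebra ring.
Import Order.TTheory GRing.Theory Num.Theory.
Local Open Scope ring_scope.

Lemma arith1 (C : numClosedFieldType) (k e f g x y a b : C) :
  0 < k -> 0 <= e -> e <= f -> 0 <= g -> 0 <= x -> 0 <= y -> 0 <= a -> 0 <= b ->
  4 * a * b <= (a + b) ^+ 2 ->
  0 < 2 * k - (a + b) * (e + f) ->
  k * x <= a * (g + e * x + f * y) ->
  k * y <= b * (g + f * x + e * y) ->
  k * (2 * k - (a + b) * (e + f)) * (x + y) <=
    2 * ((a + b) * k + (a + b) ^+ 2 * f) * g.
Proof.
move=> k0 e0 ef g0 x0 y0 a0 b0 ab G0 h1 h2.
have f0 : 0 <= f by apply: le_trans ef.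
have aeb : (a + b) * e <= (a + b) * (e + f) - (a + b) * e.
  by rewrite -mulrBr (addrC e f) addrK ler_wpM2l ?addr_ge0.
have se : (a + b) * e <= k.
  rewrite -(@ler_pM2l _ 2) //.
  have -> : 2 * ((a+b)*e) = (a+b)*e + (a+b)*e by ring.
  apply: le_trans (lerD (lexx _) aeb) _. rewrite addrC subrK.
  by rewrite -subr_ge0 ltW.
have c1 : 0 <= k - a * e.
  rewrite subr_ge0; apply: le_trans se; rewrite ler_wpM2r // lerDl //.
have c2 : 0 <= k - b * e.
  rewrite subr_ge0; apply: le_trans se; rewrite ler_wpM2r // lerDr //.
set al := k - b * e + b * f.
set be := k - a * e + a * f.
have al0 : 0 <= al by rewrite addr_ge0 // mulr_ge0.
have be0 : 0 <= be by rewrite addr_ge0 // mulr_ge0.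
have h1' : (k - a * e) * x <= a * g + a * f * y.
  rewrite mulrBl lerBlDr; apply: le_trans h1 _; rewrite le_eqVlt; apply/orP; left; apply/eqP; ring.
have h2' : (k - b * e) * y <= b * g + b * f * x.
  rewrite mulrBl lerBlDr; apply: le_trans h2 _; rewrite le_eqVlt; apply/orP; left; apply/eqP; ring.
set Dt := (k - a * e) * (k - b * e) - a * b * f ^+ 2.
have key : Dt * (x + y) <= (al * a + be * b) * g.
  have := lerD (ler_wpM2l al0 h1') (ler_wpM2l be0 h2').
  move=> H; rewrite -subr_ge0; rewrite -subr_ge0 in H.
  suff -> : (al * a + be * b) * g - Dt * (x + y) =
     al * (a * g + a * f * y) + be * (b * g + b * f * x) -
       (al * ((k - a * e) * x) + be * ((k - b * e) * y)) by [].
  rewrite /Dt /al /be; ring.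
have Dlow : k * (2 * k - (a + b) * (e + f)) <= 2 * Dt.
  rewrite -subr_ge0.
  have -> : 2 * Dt - k * (2 * k - (a + b) * (e + f)) =
     (f - e) * (k * (a + b) - 2 * a * b * (e + f)) +
     2 * a * b * (e ^+ 2 - f ^+ 2) - 2 * a * b * (e ^+ 2 - f ^+ 2) +
     0 by rewrite /Dt; ring.
  rewrite addr0 addrK mulr_ge0 // ?subr_ge0 //.
  (* k (a+b) >= 2ab(e+f) *)
  have ef0 : 0 <= e + f by rewrite addr_ge0.
  have H4 : 4 * (a * b * (e + f)) <= (a + b) ^+ 2 * (e + f).
    by rewrite !mulrA; apply: ler_wpM2r.
  have H5 : (a + b) ^+ 2 * (e + f) <= 2 * k * (a + b).
    rewrite expr2 -mulrA mulrC ler_wpM2r ?addr_ge0 //.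
    by rewrite -subr_ge0 ltW.
  have := le_trans H4 H5.
  have -> : 4 * (a * b * (e + f)) = 2 * (2 * a * b * (e + f)) by ring.
  have -> : 2 * k * (a + b) = 2 * (k * (a + b)) by ring.
  by rewrite ler_pM2l.
have Om : al * a + be * b <= (a + b) * k + (a + b) ^+ 2 * f.
  have -> : al * a + be * b = (k - b * e) * a + (k - a * e) * b + 2 * a * b * f by rewrite /al /be; ring.
  have -> : (a + b) * k + (a + b) ^+ 2 * f = k * a + k * b + (a ^+ 2 + b ^+ 2) * f + 2 * a * b * f by ring.
  apply: lerD => //; apply: le_trans (_ : k * a + k * b <= _).
    apply: lerD; rewrite ler_wpM2r // lerBlDr lerDl mulr_ge0 //.
  by rewrite lerDl mulr_ge0 // addr_ge0 // exprn_ge0.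
have xy0 : 0 <= x + y by rewrite addr_ge0.
apply: le_trans (ler_wpM2r xy0 Dlow) _.
rewrite -!mulrA ler_wpM2l //.
apply: le_trans key _; rewrite ler_wpM2r //.
by rewrite mulrA -expr2.
Qed.


Lemma maxC_le {C : numClosedFieldType} {x y z : C} : x <= z -> y <= z -> Num.max x y <= z.
Proof. by move=> hx hy; rewrite maxEle; case: ifP. Qed.

Lemma maxC_gel {C : numClosedFieldType} {x y : C} : 0 <= x -> 0 <= y -> x <= Num.max x y.
Proof. by move=> hx hy; rewrite maxEle; case: ifP. Qed.

Lemma maxC_ger {C : numClosedFieldType} {x y : C} : 0 <= x -> 0 <= y -> y <= Num.max x y.
Proof.
move=> hx hy; rewrite maxEle; case: ifP => // /negbT.
by rewrite real_leNgt ?ger0_real // negbK => /ltW.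
Qed.

Lemma maxC_ge0 {C : numClosedFieldType} {x y : C} : 0 <= x -> 0 <= y -> 0 <= Num.max x y.
Proof. move=> hx hy; exact: (le_trans hx (maxC_gel hx hy)). Qed.

Lemma bigmax_ge0 {C : numClosedFieldType} (I : finType) (P : pred I) (F : I -> C) :
  (forall i, P i -> 0 <= F i) -> 0 <= \big[Num.max/0]_(i | P i) F i.
Proof.
move=> hF; apply: (big_ind (fun x => 0 <= x)) => //.
by move=> x y; apply: maxC_ge0.
Qed.

Lemma le_bigmax0 {C : numClosedFieldType} (I : finType) (P : pred I) (F : I -> C) i0 :
  (forall i, P i -> 0 <= F i) -> P i0 -> F i0 <= \big[Num.max/0]_(i | P i) F i.
Proof.
move=> hF Pi0; rewrite /index_enum; have : i0 \in Finite.enum I by rewrite -enumT mem_enum.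
elim: (Finite.enum I) => // j r IH; rewrite inE big_cons.
have g0 : 0 <= \big[Num.max/0]_(i <- r | P i) F i.
  by apply: (big_ind (fun x => 0 <= x)) => // x y; apply: maxC_ge0.
case/orP => [/eqP <-|/IH H]; first by rewrite Pi0 maxC_gel ?hF.
case: ifP => // Pj; apply: le_trans H (maxC_ger _ g0); exact: hF.
Qed.

Lemma mu_self_ge {C : numClosedFieldType} (M p : nat) (P : 'M[C]_(M, p)) (k l : 'I_p) :
  l != k -> `|colinner P P k l| <= mu_self P.
Proof.
move=> lk; rewrite /mu_self.
apply: le_trans (@le_bigmax0 C _ (xpredT) (fun k => \big[Num.max/0]_(l < p | l != k) `|colinner P P k l|) k _ _) => //.
  by apply: (@le_bigmax0 C _ (fun l => l != k) (fun l => `|colinner P P k l|)).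
by move=> i _; apply: bigmax_ge0.
Qed.

Lemma mu_self_ge0 {C : numClosedFieldType} (M p : nat) (P : 'M[C]_(M, p)) : 0 <= mu_self P.
Proof. by apply: bigmax_ge0 => i _; apply: bigmax_ge0. Qed.

Lemma mu_mutual_ge {C : numClosedFieldType} (M p q : nat) (P : 'M[C]_(M, p)) (Q : 'M[C]_(M, q)) k l :
  `|colinner P Q k l| <= mu_mutual P Q.
Proof.
rewrite /mu_mutual.
apply: le_trans (@le_bigmax0 C _ (xpredT) (fun k => \big[Num.max/0]_(l < q) `|colinner P Q k l|) k _ _) => //.
  by apply: (@le_bigmax0 C _ (xpredT) (fun l => `|colinner P Q k l|)).
by move=> i _; apply: bigmax_ge0.
Qed.

Lemma mu_mutual_ge0 {C : numClosedFieldType} (M p q : nat) (P : 'M[C]_(M, p)) (Q : 'M[C]_(M, q)) :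
  0 <= mu_mutual P Q.
Proof. by apply: bigmax_ge0 => i _; apply: bigmax_ge0. Qed.

Lemma colinner_rowmx {C : numClosedFieldType} (M Na Nb : nat) (A : 'M[C]_(M, Na)) (B : 'M[C]_(M, Nb))
  (j k : 'I_(Na + Nb)) :
  j != k -> mu_self B <= mu_self A ->
  `|colinner (row_mx A B) (row_mx A B) j k| <=
     (if (j < Na)%N == (k < Na)%N then mu_self A else mu_mutual A B).
Proof.
move=> jk hab; move: jk.
case: (split_ordP j) => a ->; case: (split_ordP k) => b -> /= jk.
-
  have -> : colinner (row_mx A B) (row_mx A B) (lshift Nb a) (lshift Nb b) = colinner A A a b.
    by apply: eq_bigr => i _; rewrite !row_mxEl.
  apply: mu_self_ge; apply: contraNneq jk => ->. by [].
-
  have -> : colinner (row_mx A B) (row_mx A B) (lshift Nb a) (rshift Na b) = colinner A B a b.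
    by apply: eq_bigr => i _; rewrite row_mxEl row_mxEr.
  exact: mu_mutual_ge.
-
  have -> : colinner (row_mx A B) (row_mx A B) (rshift Na a) (lshift Nb b) = (colinner A B b a)^*.
    rewrite /colinner rmorph_sum; apply: eq_bigr => i _.
    by rewrite row_mxEl row_mxEr rmorphM /= conjCK mulrC.
  rewrite norm_conjC; exact: mu_mutual_ge.
-
  have -> : colinner (row_mx A B) (row_mx A B) (rshift Na a) (rshift Na b) = colinner B B a b.
    by apply: eq_bigr => i _; rewrite !row_mxEr.
  apply: le_trans hab; apply: mu_self_ge; apply: contraNneq jk => ->. by [].
Qed.

Lemma unit_cols_rowmx {C : numClosedFieldType} (M Na Nb : nat) (A : 'M[C]_(M, Na)) (B : 'M[C]_(M, Nb)) :
  unit_cols A -> unit_cols B -> unit_cols (row_mx A B).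
Proof.
move=> uA uB j; case: (split_ordP j) => a ->.
  by rewrite -(uA a); apply: eq_bigr => i _; rewrite row_mxEl.
by rewrite -(uB a); apply: eq_bigr => i _; rewrite row_mxEr.
Qed.


Lemma amgm2 {C : numClosedFieldType} (S p q : C) : 0 <= S -> 0 <= p -> 0 <= q ->
  2 * S * (p * q) <= S ^+ 2 * p ^+ 2 + q ^+ 2.
Proof.
move=> S0 p0 q0; rewrite -subr_ge0.
have -> : S ^+ 2 * p ^+ 2 + q ^+ 2 - 2 * S * (p * q) = (S * p - q) ^+ 2 by ring.
rewrite -real_normK ?exprn_ge0 //; apply: realB; apply: ger0_real => //.
exact: mulr_ge0.
Qed.

Lemma cs_unit {C : numClosedFieldType} (M : nat) (a b : 'I_M -> C) :
  \sum_i `|a i| ^+ 2 = 1 ->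
  `|\sum_i (a i)^* * b i| <= sqrtC (\sum_i `|b i| ^+ 2).
Proof.
move=> ha; set S := sqrtC _.
have T0 : 0 <= \sum_i `|b i| ^+ 2 by apply: sumr_ge0 => i _; exact: exprn_ge0.
have S0 : 0 <= S by rewrite sqrtC_ge0.
have SS : S ^+ 2 = \sum_i `|b i| ^+ 2 by rewrite sqrtCK.
apply: le_trans (ler_norm_sum _ _ _) _.
under eq_bigr => i _ do rewrite normrM norm_conjC.
have [Sz|Snz] := eqVneq S 0.
  have bz : forall i, `|b i| ^+ 2 = 0.
    move=> i; have Hs : \sum_i `|b i| ^+ 2 = 0 by rewrite -SS Sz expr0n.
    by apply: (psumr_eq0P _ Hs) => // j _; exact: exprn_ge0.
  rewrite big1 // => i _.
  by move/eqP: (bz i); rewrite expf_eq0 /= => /eqP ->; rewrite mulr0.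
have Sp : 0 < S by rewrite lt_def Snz.
rewrite -(@ler_pM2l _ (2 * S)) ?mulr_gt0 //.
rewrite mulr_sumr.
apply: le_trans (_ : \sum_i (S ^+ 2 * `|a i| ^+ 2 + `|b i| ^+ 2) <= _).
  by apply: ler_sum => i _; apply: amgm2.
rewrite big_split /= -mulr_sumr ha mulr1 -SS.
by rewrite le_eqVlt; apply/orP; left; apply/eqP; ring.
Qed.


Lemma l2_le_l1 {C : numClosedFieldType} (n : nat) (v : 'cV[C]_n) : l2norm v <= l1norm v.
Proof.
rewrite /l2norm /l1norm.
have L0 : 0 <= \sum_(i < n) `|v i 0| by apply: sumr_ge0 => i _.
rewrite -[X in _ <= X](sqrCK L0) ler_sqrtC ?nnegrE ?exprn_ge0 ?sumr_ge0 // => [|i _]; last exact: exprn_ge0.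
rewrite expr2 mulr_suml; apply: ler_sum => i _.
rewrite expr2 ler_wpM2l //.
rewrite (bigD1 i) //= lerDl; apply: sumr_ge0 => j _ //.
Qed.

Lemma coh_basic {C : numClosedFieldType} (M N : nat) (D : 'M[C]_(M, N)) (h : 'cV[C]_N)
   (r1 r2 : 'cV[C]_M) (eps eta : C) :
  unit_cols D -> D *m h = r1 - r2 -> l2norm r1 <= eta -> l2norm r2 <= eps ->
  forall j, `|h j 0| <= (eps + eta) + \sum_(k | k != j) `|colinner D D j k| * `|h k 0|.
Proof.
move=> uD Dh h1 h2 j.
set X := \sum_i (D i j)^* * (D *m h) i 0.
have XE : X = h j 0 + \sum_(k | k != j) colinner D D j k * h k 0.
  rewrite /X.
  under eq_bigr => i _ do rewrite mxE mulr_sumr.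
  rewrite exchange_big /= (bigD1 j) //=; congr (_ + _).
    under eq_bigr => i _ do rewrite mulrA.
    rewrite -mulr_suml.
    have -> : \sum_i (D i j)^* * D i j = 1.
      by rewrite -(uD j); apply: eq_bigr => i _; rewrite normCKC.
    by rewrite mul1r.
  by apply: eq_bigr => k _; rewrite /colinner mulr_suml; apply: eq_bigr => i _; rewrite mulrA.
have hjE : h j 0 = X - \sum_(k | k != j) colinner D D j k * h k 0 by rewrite XE addrK.
rewrite hjE; apply: le_trans (ler_normB _ _) _; apply: lerD.
  rewrite /X Dh.
  have -> : \sum_i (D i j)^* * (r1 - r2) i 0 =
     \sum_i (D i j)^* * r1 i 0 - \sum_i (D i j)^* * r2 i 0.
    by rewrite -sumrB; apply: eq_bigr => i _; rewrite !mxE mulrBr.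
  apply: le_trans (ler_normB _ _) _; rewrite addrC; apply: lerD.
    apply: le_trans h2; apply: cs_unit; exact: uD.
  apply: le_trans h1; apply: cs_unit; exact: uD.
apply: le_trans (ler_norm_sum _ _ _) _.
by apply: ler_sum => k _; rewrite normrM.
Qed.


Definition cond1 {C : numClosedFieldType} (ma md : C) (s : nat) : bool :=
  [&& 0 < 2 * (1 + ma) - s%:R * ((ma + md) + 2 * md), 0 <= ma & 0 <= md].
Definition cond2 {C : numClosedFieldType} (md : C) (s : nat) : bool :=
  (0 < 1 + md - s%:R * (2 * md)) && (0 <= md).
Definition K1 {C : numClosedFieldType} (ma md : C) (s : nat) : C :=
  2 * (s%:R * (1 + ma) + s%:R ^+ 2 * (2 * md)) /
    ((1 + ma) * (2 * (1 + ma) - s%:R * ((ma + md) + 2 * md))).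
Definition K2 {C : numClosedFieldType} (md : C) (s : nat) : C :=
  s%:R / (1 + md - s%:R * (2 * md)).
Definition Kc {C : numClosedFieldType} (ma md : C) (s : nat) : C :=
  (if cond1 ma md s then K1 ma md s else 0) + (if cond2 md s then K2 md s else 0).

Lemma K1_ge0 {C : numClosedFieldType} (ma md : C) s : cond1 ma md s -> 0 <= K1 ma md s.
Proof.
case/and3P => G0 ma0 md0.
have k0 : 0 < 1 + ma by apply: lt_le_trans ltr01 _; rewrite lerDl.
apply: divr_ge0; last by apply: mulr_ge0; apply: ltW.
apply: mulr_ge0 => //; apply: addr_ge0; apply: mulr_ge0 => //; last exact: mulr_ge0.
  exact: ltW.
exact: exprn_ge0.
Qed.

Lemma K2_ge0 {C : numClosedFieldType} (md : C) s : cond2 md s -> 0 <= K2 md s.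
Proof. by case/andP => g0 md0; apply: divr_ge0 => //; apply: ltW. Qed.

Lemma Kc_ge0 {C : numClosedFieldType} (ma md : C) s : 0 <= Kc ma md s.
Proof.
rewrite /Kc; apply: addr_ge0; case: ifP => // H; [exact: K1_ge0 | exact: K2_ge0].
Qed.

Lemma Kc_bound1 {C : numClosedFieldType} (ma md P g : C) s :
  cond1 ma md s -> 0 <= g ->
  (1 + ma) * (2 * (1 + ma) - s%:R * ((ma + md) + 2 * md)) * P <=
     2 * (s%:R * (1 + ma) + s%:R ^+ 2 * (2 * md)) * g ->
  P <= Kc ma md s * g.
Proof.
move=> c1 g0 H; rewrite /Kc c1.
have k0 : 0 < 1 + ma by case/and3P: c1 => _ ma0 _; apply: lt_le_trans ltr01 _; rewrite lerDl.
have kG : 0 < (1 + ma) * (2 * (1 + ma) - s%:R * ((ma + md) + 2 * md)).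
  by case/and3P: c1 => G0 _ _; apply: mulr_gt0.
apply: le_trans (_ : P <= K1 ma md s * g) _.
  rewrite /K1 mulrAC ler_pdivlMr //; by rewrite mulrC.
rewrite mulrDl lerDl mulr_ge0 //; case: ifP => // H2; exact: K2_ge0.
Qed.

Lemma Kc_bound2 {C : numClosedFieldType} (ma md P g : C) s :
  cond2 md s -> 0 <= g ->
  (1 + md - s%:R * (2 * md)) * P <= s%:R * g ->
  P <= Kc ma md s * g.
Proof.
move=> c2 g0 H; rewrite /Kc c2.
have gp : 0 < 1 + md - s%:R * (2 * md) by case/andP: c2.
apply: le_trans (_ : P <= K2 md s * g) _.
  rewrite /K2 mulrAC ler_pdivlMr //; by rewrite mulrC.
rewrite mulrDl lerDr mulr_ge0 //; case: ifP => // H2; exact: K1_ge0.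
Qed.


Theorem theorem4 (C : numClosedFieldType) :
  exists C7 C8 : C -> C -> C -> C -> nat -> C,
    (forall (ma mb mm md : C) (s : nat), 0 <= C7 ma mb mm md s /\ 0 <= C8 ma mb mm md s) /\
    forall (M Na Nb : nat) (A : 'M[C]_(M, Na)) (B : 'M[C]_(M, Nb)),
      unit_cols A -> unit_cols B ->
      let D := row_mx A B in
      let mua := mu_self A in
      let mub := mu_self B in
      let mum := mu_mutual A B in
      let mud := Num.max mua (Num.max mub mum) in
      mub <= mua ->
      forall (w : 'cV[C]_(Na + Nb)) (n : 'cV[C]_M) (eps : C),
        l2norm n <= eps ->
        let z := D *m w + n in
        forall (s : nat) (W : {set 'I_(Na + Nb)}),
          (0 < s)%N ->
          is_supp s w W ->
          (s%:R * (mua + 2 * mud + sqrtC (mua ^+ 2 + mum ^+ 2)) < 2 * (1 + mua)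
           \/ s%:R * (2 * mud) < 1 + mud) ->
          forall (eta : C), eps <= eta ->
          forall (what : 'cV[C]_(Na + Nb)),
            l2norm (z - D *m what) <= eta ->
            (forall wt : 'cV[C]_(Na + Nb),
                l2norm (z - D *m wt) <= eta -> l1norm what <= l1norm wt) ->
            l2norm (w - what) <=
              C7 mua mub mum mud s * (eps + eta)
              + C8 mua mub mum mud s * l1norm (w - restrict w W).
Proof.
exists (fun ma mb mm md s => 2 * Kc ma md s).
exists (fun ma mb mm md s => 4 * Kc ma md s * (if 0 <= md then md else 0) + 2).
split.
  move=> ma mb mm md s; split; first by rewrite mulr_ge0 ?Kc_ge0.
  apply: addr_ge0 => //; apply: mulr_ge0; first by rewrite mulr_ge0 ?Kc_ge0.
  by case: ifP.
move=> M Na Nb A B uA uB D mua mub mum mud hab w n eps hn z s W s0 [cardW _] hcond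
  eta heta what hwhat hmin.
have mua0 : 0 <= mua := mu_self_ge0 _ _ A.
have mub0 : 0 <= mub := mu_self_ge0 _ _ B.
have mum0 : 0 <= mum := mu_mutual_ge0 _ _ _ A B.
have mud0 : 0 <= mud by apply: maxC_ge0 => //; apply: maxC_ge0.
have muamd : mua <= mud by apply: maxC_gel => //; apply: maxC_ge0.
have mummd : mum <= mud.
  exact: le_trans (maxC_ger mub0 mum0) (maxC_ger mua0 (maxC_ge0 mub0 mum0)).
rewrite mud0.
set h := w - what.
set delta := eps + eta.
have Dh : D *m h = (z - D *m what) - n.
  by rewrite /h mulmxBr /z addrAC addrK.
have uD : unit_cols D by apply: unit_cols_rowmx.
have basic := @coh_basic C _ _ D h _ _ eps eta uD Dh hwhat hn.
set P := \sum_(i in W) `|h i 0|.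
set Q := \sum_(i | i \notin W) `|h i 0|.
set sig := l1norm (w - restrict w W).
have P0 : 0 <= P by apply: sumr_ge0.
have Q0 : 0 <= Q by apply: sumr_ge0.
have sigE : sig = \sum_(i | i \notin W) `|w i 0|.
  rewrite /sig /l1norm (bigID (fun i => i \in W)) /= big1 ?add0r.
    by apply: eq_bigr => i /negbTE Hi; rewrite !mxE Hi subr0.
  by move=> i Hi; rewrite !mxE Hi subrr normr0.
have sig0 : 0 <= sig by rewrite sigE; apply: sumr_ge0.
have LE : l1norm h = P + Q by rewrite /l1norm (bigID (fun i => i \in W)).
have cone : Q <= P + 2 * sig.
  have hw : l1norm what <= l1norm w.
    apply: hmin; rewrite /z addrAC subrr add0r; exact: le_trans hn heta.
  set SW := \sum_(i in W) `|w i 0|.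
  have H1 : SW - P + (Q - sig) <= l1norm what.
    rewrite /l1norm (bigID (fun i => i \in W)) /=; apply: lerD.
      rewrite /SW /P -sumrB; apply: ler_sum => i _; rewrite /h !mxE lerBlDr.
      by have := ler_normD (what i 0) (w i 0 - what i 0); rewrite [what i 0 + _]addrC subrK.
    rewrite sigE /Q -sumrB; apply: ler_sum => i _; rewrite /h !mxE lerBlDl.
    exact: ler_normB.
  have H2 : l1norm w = SW + sig by rewrite sigE /l1norm (bigID (fun i => i \in W)).
  have := le_trans H1 hw; rewrite H2.
  rewrite -subr_ge0 => H; rewrite -subr_ge0.
  suff -> : P + 2 * sig - Q = SW + sig - (SW - P + (Q - sig)) by [].
  ring.
set gam := delta + 2 * mud * sig.
have gam0 : 0 <= gam.
  have eps0 : 0 <= eps.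
    apply: le_trans hn; rewrite /l2norm sqrtC_ge0 sumr_ge0 // => i _; exact: exprn_ge0.
  apply: addr_ge0; first exact: addr_ge0 eps0 (le_trans eps0 heta).
  by rewrite mulr_ge0 // mulr_ge0.
have Lle : P + Q <= 2 * P + 2 * sig.
  have -> : 2 * P + 2 * sig = P + (P + 2 * sig) by ring.
  exact: lerD.
have hmu : forall j k, j != k -> `|colinner D D j k| <=
    (if (j < Na)%N == (k < Na)%N then mua else mum).
  by move=> j k jk; apply: colinner_rowmx.
have core : P <= Kc mua mud s * gam.
  case: hcond => [hc1|hc2]; last first.
    have c2 : cond2 mud s by rewrite /cond2 mud0 subr_gt0 andbT.
    apply: Kc_bound2 => //.
    have pc : forall j, (1 + mud) * `|h j 0| <= delta + mud * (P + Q).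
      move=> j; rewrite -LE /l1norm (bigD1 j) //=.
      set S' := \sum_(i | i != j) _.
      have E : delta + mud * (`|h j 0| + S') - (1 + mud) * `|h j 0| =
               delta + mud * S' - `|h j 0| by ring.
      rewrite -subr_ge0 E subr_ge0.
      apply: le_trans (basic j) _; rewrite lerD2l /S' mulr_sumr.
      apply: ler_sum => k kj; rewrite ler_wpM2r //.
      apply: le_trans (hmu j k _) _; first by rewrite eq_sym.
      by case: ifP.
    have sumW : (1 + mud) * P <= s%:R * (delta + mud * (P + Q)).
      rewrite /P mulr_sumr.
      apply: le_trans (_ : \sum_(i in W) (delta + mud * (P + Q)) <= _).
        by apply: ler_sum => i _; apply: pc.
      by rewrite sumr_const cardW mulr_natl.
    have H : (1 + mud) * P <= s%:R * (delta + mud * (2 * P + 2 * sig)).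
      by apply: le_trans sumW _; rewrite ler_wpM2l // lerD2l ler_wpM2l.
    rewrite -subr_ge0; rewrite -subr_ge0 in H.
    suff -> : s%:R * gam - (1 + mud - s%:R * (2 * mud)) * P =
      s%:R * (delta + mud * (2 * P + 2 * sig)) - (1 + mud) * P by [].
    rewrite /gam; ring.
  set SA := [set i : 'I_(Na + Nb) | (i < Na)%N].
  set x := \sum_(i in W :&: SA) `|h i 0|.
  set y := \sum_(i in W :\: SA) `|h i 0|.
  have Pxy : P = x + y by rewrite /P (big_setID SA).
  have x0 : 0 <= x by apply: sumr_ge0.
  have y0 : 0 <= y by apply: sumr_ge0.
  set e := mua + mud.
  set f := 2 * mud.
  pose mu (j k : 'I_(Na + Nb)) := if (j < Na)%N == (k < Na)%N then mua else mum.
  have pc0 : forall j, (1 + mua) * `|h j 0| <= delta + \sum_k mu j k * `|h k 0|.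
    move=> j; rewrite (bigD1 j) //= {1}/mu eqxx.
    set S' := \sum_(i | i != j) _.
    have E : delta + (mua * `|h j 0| + S') - (1 + mua) * `|h j 0| =
             delta + S' - `|h j 0| by ring.
    rewrite -subr_ge0 E subr_ge0.
    apply: le_trans (basic j) _; rewrite lerD2l /S'.
    apply: ler_sum => k kj; rewrite ler_wpM2r //.
    by apply: (hmu j k); rewrite eq_sym.
  have spl : forall j, \sum_k mu j k * `|h k 0| <=
      \sum_(k in W :&: SA) mu j k * `|h k 0| + \sum_(k in W :\: SA) mu j k * `|h k 0|
      + mud * Q.
    move=> j; rewrite (bigID (fun k => k \in W)) /= (big_setID SA) /=.
    rewrite lerD2l /Q mulr_sumr; apply: ler_sum => k _; rewrite ler_wpM2r //.
    by rewrite /mu; case: ifP.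
  have Qle : Q <= x + y + 2 * sig by rewrite -Pxy.
  have hA : forall j, j \in W :&: SA -> (1 + mua) * `|h j 0| <= gam + e * x + f * y.
    move=> j; rewrite inE => /andP [_]; rewrite inE => jA.
    have E1 : \sum_(k in W :&: SA) mu j k * `|h k 0| = mua * x.
      rewrite /x mulr_sumr; apply: eq_bigr => k; rewrite inE => /andP [_].
      by rewrite inE /mu jA => ->.
    have E2 : \sum_(k in W :\: SA) mu j k * `|h k 0| = mum * y.
      rewrite /y mulr_sumr; apply: eq_bigr => k; rewrite inE => /andP [].
      by rewrite inE /mu jA => /negbTE ->.
    apply: le_trans (pc0 j) _; apply: le_trans (lerD (lexx delta) (spl j)) _.
    rewrite E1 E2.
    apply: le_trans (_ : _ <= delta + (mua * x + mud * y + mud * (x + y + 2 * sig))) _.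
      rewrite lerD2l; apply: lerD; first by rewrite lerD2l ler_wpM2r.
      by rewrite ler_wpM2l.
    by rewrite /gam /e /f le_eqVlt; apply/orP; left; apply/eqP; ring.
  have hB : forall j, j \in W :\: SA -> (1 + mua) * `|h j 0| <= gam + f * x + e * y.
    move=> j; rewrite inE => /andP []; rewrite inE => /negbTE jA _.
    have E1 : \sum_(k in W :&: SA) mu j k * `|h k 0| = mum * x.
      rewrite /x mulr_sumr; apply: eq_bigr => k; rewrite inE => /andP [_].
      by rewrite inE /mu jA => ->.
    have E2 : \sum_(k in W :\: SA) mu j k * `|h k 0| = mua * y.
      rewrite /y mulr_sumr; apply: eq_bigr => k; rewrite inE => /andP [].
      by rewrite inE /mu jA => /negbTE ->.
    apply: le_trans (pc0 j) _; apply: le_trans (lerD (lexx delta) (spl j)) _.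
    rewrite E1 E2.
    apply: le_trans (_ : _ <= delta + (mud * x + mua * y + mud * (x + y + 2 * sig))) _.
      rewrite lerD2l; apply: lerD; first by rewrite lerD2r ler_wpM2r.
      by rewrite ler_wpM2l.
    by rewrite /gam /e /f le_eqVlt; apply/orP; left; apply/eqP; ring.
  set na := #|W :&: SA|.
  set nb := #|W :\: SA|.
  have nab : (na + nb)%N = s by rewrite /na /nb cardsID.
  have h1 : (1 + mua) * x <= na%:R * (gam + e * x + f * y).
    rewrite /x mulr_sumr.
    apply: le_trans (_ : \sum_(i in W :&: SA) (gam + e * x + f * y) <= _).
      by apply: ler_sum => i; apply: hA.
    by rewrite sumr_const mulr_natl.
  have h2 : (1 + mua) * y <= nb%:R * (gam + f * x + e * y).
    rewrite /y mulr_sumr.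
    apply: le_trans (_ : \sum_(i in W :\: SA) (gam + f * x + e * y) <= _).
      by apply: ler_sum => i; apply: hB.
    by rewrite sumr_const mulr_natl.
  set r := sqrtC (mua ^+ 2 + mum ^+ 2).
  have mua_r : mua <= r.
    rewrite /r -{1}(sqrCK mua0) ler_sqrtC ?nnegrE ?addr_ge0 ?exprn_ge0 //.
    by rewrite lerDl exprn_ge0.
  have mum_r : mum <= r.
    rewrite /r -{1}(sqrCK mum0) ler_sqrtC ?nnegrE ?addr_ge0 ?exprn_ge0 //.
    by rewrite lerDr exprn_ge0.
  have mud_r : mud <= r.
    apply: maxC_le => //; apply: maxC_le => //; exact: le_trans hab mua_r.
  have k0 : 0 < 1 + mua by apply: lt_le_trans ltr01 _; rewrite lerDl.
  have G0 : 0 < 2 * (1 + mua) - s%:R * ((mua + mud) + 2 * mud).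
    rewrite subr_gt0; apply: le_lt_trans hc1; rewrite ler_wpM2l //.
    have -> : mua + mud + 2 * mud = mua + 2 * mud + mud by ring.
    by rewrite lerD2l.
  have c1 : cond1 mua mud s by rewrite /cond1 G0 mua0 mud0.
  apply: Kc_bound1 => //.
  have sE : s%:R = na%:R + nb%:R :> C by rewrite -natrD nab.
  rewrite sE Pxy.
  apply: (arith1 _ _ _ _ _ _ _ _ _ k0) => //.
  - by rewrite addr_ge0.
  - have -> : 2 * mud = mud + mud by ring.
    by rewrite lerD2r.
  - rewrite -subr_ge0 (_ : _ - _ = (na%:R - nb%:R : C) ^+ 2); last by ring.
    by rewrite -real_normK ?exprn_ge0 // realB ?ger0_real.
  - by rewrite -sE.
apply: le_trans (l2_le_l1 _ h) _; rewrite LE.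
apply: le_trans (_ : P + Q <= 2 * P + 2 * sig) _.
  have -> : 2 * P + 2 * sig = P + (P + 2 * sig) by ring.
  exact: lerD.
apply: le_trans (_ : 2 * P + 2 * sig <= 2 * (Kc mua mud s * gam) + 2 * sig) _.
  by apply: lerD => //; rewrite ler_pM2l.
by rewrite /gam le_eqVlt; apply/orP; left; apply/eqP; ring.
Qed.
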